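(* Let $(\tilde S,\tilde g)$ and $(\tilde T,\tilde f)$ be lifted partial permutations with $\tilde T=\tilde g(\tilde S)$. If $\mathrm{cr}(\tilde f\circ\tilde g)=\mathrm{cr}(\tilde f)+\mathrm{cr}(\tilde g)$, then $w_1(\tilde f\circ\tilde g)=w_1(\tilde f)+w_1(\tilde g)$ and $w_m(\tilde f\circ\tilde g)=w_m(\tilde f)+w_m(\tilde g)$.
   Context: Fix integers $0<k<m$. For $t\in\frac12\mathbb Z$ let $r_t(x)=2t-x$, and let $G_m$ be the group of isometries of $\mathbb R$ generated by $r_{1/2}$ and $r_{m-1/2}$; it acts on $\mathbb Z$ with $\mathbb Z/G_m\cong\{1,\dots,m-1\}$. A lifted partial permutation on $k$ letters is a pair $(\tilde S,\tilde f)$ with $\tilde S\subset\mathbb Z$ $G_m$-invariant, $|\tilde S/G_m|=k$, and $\tilde f:\tilde S\to\mathbb Z$ $G_m$-equivariant such that the induced map $\tilde S/G_m\to\mathbb Z/G_m$ is injective. Weight vector: $w_j(\tilde f)=\tfrac12\#\{i\in\tilde S: i<j-\tfrac12<\tilde f(i)\text{ or } i>j-\tfrac12>\tilde f(i)\}$ for $j=1,\dots,m$. A crossing of $\tilde f$ is a class $\langle i,j\rangle$ of pairs $i<j$ in $\tilde S$ with $\tilde f(i)>\tilde f(j)$, modulo $(i,j)\sim(i',j')$ iff $\{gi,gj\}=\{i',j'\}$ for some $g\in G_m$; $\mathrm{cr}(\tilde f)$ is the number of crossings. If $\tilde T=\tilde g(\tilde S)$ then $(\tilde S,\tilde f\circ\tilde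 g)$ is a lifted partial permutation. *)

(* Defs.v *)
From mathcomp Require Import all_boot all_order all_algebra.
From Stdlib Require Import ClassicalEpsilon.
Set Implicit Arguments. Unset Strict Implicit. Unset Printing Implicit Defensive.
Import Order.TTheory GRing.Theory Num.Theory.
Local Open Scope ring_scope.

(* Reflection r_t(x) = 2t - x, for t in (1/2)Z, parametrised by t2 = 2t. *)
Definition refl (t2 : int) (x : int) : int := t2 - x.

Definition r_half (x : int) : int := refl 1 x.
Definition r_mhalf (m : nat) (x : int) : int := refl (2 * m%:Z - 1) x.

(* An element of G_m given as a word in the generators (both are involutions,
   so these words give exactly the group generated by them). *)
Fixpoint Gact (m : nat) (w : seq bool) (x : int) : int :=
  match w with
  | [::] => x
  | b :: w' => (if b then r_half else r_mhalf m) (Gact m w' x)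
  end.

Definition Gorb (m : nat) (x y : int) : Prop := exists w, y = Gact m w x.

Definition class_enum {A : Type} (P : A -> Prop) (E : A -> A -> Prop)
  (s : seq A) : Prop :=
  (forall a, List.In a s -> P a) /\
  (forall a, P a -> exists2 b, List.In b s & E a b) /\
  (forall s1 a s2 b s3, s = s1 ++ a :: s2 ++ b :: s3 -> ~ E a b /\ ~ E b a).

(* number of E-classes of P (0 if there is no finite system of representatives) *)
Definition n_classes {A : Type} (P : A -> Prop) (E : A -> A -> Prop) : nat :=
  match excluded_middle_informative (exists s, class_enum P E s) with
  | left H => size (proj1_sig (constructive_indefinite_description _ H))
  | right _ => 0%N
  end.

(* cardinality of a finite subset (0 if infinite) *)
Definition fin_card {A : Type} (P : A -> Prop) : nat := n_classes P (@eq A).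

(* (S, f) is a lifted partial permutation on k letters (f only matters on S) *)
Definition lifted_pperm (m k : nat) (S : int -> Prop) (f : int -> int) : Prop :=
  [/\ (forall w x, S x -> S (Gact m w x)),
      n_classes S (Gorb m) = k,
      (forall w x, S x -> f (Gact m w x) = Gact m w (f x)) &
      (forall x y, S x -> S y -> Gorb m (f x) (f y) -> Gorb m x y)].

Definition weight (S : int -> Prop) (f : int -> int) (j : int) : rat :=
  let c : rat := j%:~R - 1 / 2 in
  (fin_card (fun i : int => S i /\
     ((i%:~R < c /\ c < (f i)%:~R) \/ (i%:~R > c /\ c > (f i)%:~R))))%:R / 2.

Definition crossing_pair (S : int -> Prop) (f : int -> int) (p : int * int) : Prop :=
  S p.1 /\ S p.2 /\ p.1 < p.2 /\ f p.1 > f p.2.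

Definition pair_equiv (m : nat) (p q : int * int) : Prop :=
  exists w, (Gact m w p.1 = q.1 /\ Gact m w p.2 = q.2) \/
            (Gact m w p.1 = q.2 /\ Gact m w p.2 = q.1).

Definition cr (m : nat) (S : int -> Prop) (f : int -> int) : nat :=
  n_classes (crossing_pair S f) (pair_equiv m).

(* Main.v *)
Require Import Defs.
From mathcomp Require Import all_boot all_order all_algebra.
From mathcomp Require Import zify lra.
From Stdlib Require Import ClassicalEpsilon Classical_Prop.
From Stdlib Require List.
Import Order.TTheory GRing.Theory Num.Theory.
Local Open Scope ring_scope.


Fixpoint nodupE {A} (E : A -> A -> Prop) (s : seq A) : Prop :=
  match s with
  | [::] => True
  | a :: s' => (forall b, List.In b s' -> ~ E a b /\ ~ E b a) /\ nodupE E s'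
  end.

Lemma In_cat A (x : A) s1 s2 : List.In x (s1 ++ s2) <-> List.In x s1 \/ List.In x s2.
Proof. elim: s1 => [|a s1 IH] /=; first tauto. move: IH; tauto. Qed.

Lemma In_split A (x : A) s : List.In x s -> exists s1 s2, s = s1 ++ x :: s2.
Proof.
elim: s => [|a s IH] //= [->|/IH [s1 [s2 ->]]]; first by exists [::], s.
by exists (a :: s1), s2.
Qed.

Arguments In_split {A x s}.
Arguments In_cat {A x s1 s2}.

Lemma In_map A B (f : A -> B) y s : List.In y (map f s) <-> exists x, y = f x /\ List.In x s.
Proof.
elim: s => [|a s IH] /=; first by split => // -[x []].
split.
- move=> [<-|H]; first by exists a; split => //; left.
  have [x [-> Hx]] := proj1 IH H. by exists x; split => //; right.
- move=> [x [Ey [Hxa|Hx]]]; first by left; rewrite Ey Hxa.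
  by right; apply: (proj2 IH); exists x.
Qed.

Arguments In_map {A B f y s}.

Lemma In_mem (T : eqType) (x : T) s : x \in s -> List.In x s.
Proof. elim: s => //= a s IH; rewrite inE => /orP [/eqP ->|/IH]; auto. Qed.

Lemma nodupE_cat A (E : A -> A -> Prop) s1 s2 :
  nodupE E s1 -> nodupE E s2 ->
  (forall a b, List.In a s1 -> List.In b s2 -> ~ E a b /\ ~ E b a) ->
  nodupE E (s1 ++ s2).
Proof.
elim: s1 => [|a s1 IH] //= [H1 N1] N2 X; split.
- move=> b /In_cat [Hb|Hb]; first exact: H1.
  by apply: X => //=; left.
- apply: IH => // a' b' Ha' Hb'; apply: X => //=; by right.
Qed.

Lemma nodupE_third A (E : A -> A -> Prop) s :
  nodupE E s -> forall s1 a s2 b s3, s = s1 ++ a :: s2 ++ b :: s3 -> ~ E a b /\ ~ E b a.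
Proof.
elim: s => [|x s IH] /=; first by move=> _ [|? ?] ? ? ? ?.
move=> [Hx N] [|y s1] a s2 b s3 /= [Exa Es].
- by rewrite -Exa; apply: Hx; rewrite Es; apply/In_cat; right; left.
- exact: (IH N s1 a s2 b s3 Es).
Qed.

Lemma third_nodupE A (E : A -> A -> Prop) s :
  (forall s1 a s2 b s3, s = s1 ++ a :: s2 ++ b :: s3 -> ~ E a b /\ ~ E b a) -> nodupE E s.
Proof.
elim: s => [|x s IH] H //=; split.
- move=> b Hb; have [s2 [s3 Es]] := In_split Hb. by apply: (H [::] x s2 b s3); rewrite Es.
- apply: IH => s1 a s2 b s3 Es; by apply: (H (x :: s1) a s2 b s3); rewrite Es.
Qed.

Arguments third_nodupE {A E s}.
Arguments nodupE_third {A E s}.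

Definition equivR {A} (E : A -> A -> Prop) :=
  (forall a, E a a) /\ (forall a b, E a b -> E b a) /\ (forall a b c, E a b -> E b c -> E a c).

Lemma eq_equivR A : equivR (@eq A).
Proof. split; [done|split; congruence]. Qed.

Lemma cover_enum A (P : A -> Prop) (E : A -> A -> Prop) (L : seq A) :
  equivR E -> (forall a, P a -> exists b, [/\ List.In b L, P b & E a b]) ->
  exists s, class_enum P E s.
Proof.
move=> [Er [Es Et]] HL.
have: exists s, [/\ (forall a, List.In a s -> P a), nodupE E s &
          (forall b, List.In b L -> P b -> exists2 c, List.In c s & E b c)].
  elim: L {HL} => [|x L [s [H1 H2 H3]]].
    by exists [::]; split.
  case: (classic (P x /\ forall c, List.In c s -> ~ E x c)) => [[Px Hx]|Hn].
  - exists (x :: s); split => /=.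
    + by move=> a [<-|/H1].
    + split => // b Hb; split; [exact: Hx | move/Es; exact: Hx].
    + move=> b [<-|Hb] Pb; first by exists x; [left|apply: Er].
      by have [c Hc Ebc] := H3 b Hb Pb; exists c => //; right.
  - exists s; split => // b [<-|Hb] Pb; last exact: H3.
    apply: NNPP => Hno; apply: Hn; split => // c Hc Exc; apply: Hno; by exists c.
move=> [s [H1 H2 H3]]; exists s; split => //; split.
  move=> a Pa; have [b [Lb Pb Eab]] := HL a Pa; have [c Hc Ebc] := H3 b Lb Pb.
  by exists c => //; apply: Et Ebc.
exact: nodupE_third.
Qed.

Lemma size_le_enum A (E : A -> A -> Prop) s s' :
  (forall a b, E a b -> E b a) -> (forall a b c, E a b -> E b c -> E a c) ->
  nodupE E s -> (forall a, List.In a s -> exists2 b, List.In b s' & E a b) ->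
  (size s <= size s')%N.
Proof.
move=> Es Et; elim: s s' => [|a s IH] s' //= [Ha N] H.
have [b Hb Eab] := H a (or_introl erefl).
have [s1 [s2 Es']] := In_split Hb.
have -> : size s' = (size (s1 ++ s2)).+1 by rewrite Es' !size_cat /= addnS.
rewrite ltnS; apply: IH => // a' Ha'.
have [b' Hb' Eab'] := H a' (or_intror Ha').
move: Hb'; rewrite Es' => /In_cat [Hb'|/= [Hb'|Hb']].
- by exists b' => //; apply/In_cat; left.
- subst b'. exfalso; apply: (proj1 (Ha a' Ha')). apply: Et Eab (Es _ _ Eab').
- by exists b' => //; apply/In_cat; right.
Qed.

Arguments size_le_enum {A E s s'}.

Lemma n_classes_eq A (P : A -> Prop) E s : equivR E -> class_enum P E s -> n_classes P E = size s.
Proof.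
move=> [Er [Es Et]] Hs; rewrite /n_classes.
case: excluded_middle_informative => [H|H]; last by exfalso; apply: H; exists s.
case: (constructive_indefinite_description _ H) => s' Hs' /=.
move: Hs Hs' => [H1 [H2 H3]] [H1' [H2' H3']].
apply/eqP; rewrite eqn_leq; apply/andP; split.
- apply: (size_le_enum Es Et (third_nodupE H3')). by move=> a /H1' /H2.
- apply: (size_le_enum Es Et (third_nodupE H3)). by move=> a /H1 /H2'.
Qed.

Lemma class_enum_iff A (P Q : A -> Prop) E s :
  (forall a, P a <-> Q a) -> class_enum P E s -> class_enum Q E s.
Proof.
move=> HPQ [H1 [H2 H3]]; split; [|split] => //.
- by move=> a /H1 /HPQ.
- by move=> a /HPQ /H2.
Qed.

Lemma class_enum_union A (P Q R : A -> Prop) E s1 s2 :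
  class_enum P E s1 -> class_enum Q E s2 ->
  (forall a b, P a -> Q b -> ~ E a b /\ ~ E b a) ->
  (forall a, R a <-> P a \/ Q a) -> class_enum R E (s1 ++ s2).
Proof.
move=> [P1 [P2 P3]] [Q1 [Q2 Q3]] D HR; split; [|split].
- by move=> a /In_cat [/P1|/Q1] ?; apply/HR; [left|right].
- move=> a /HR [/P2 [b ? ?]|/Q2 [b ? ?]]; exists b => //; apply/In_cat; [left|right] => //.
- apply: nodupE_third; apply: nodupE_cat; [exact: third_nodupE|exact: third_nodupE|].
  by move=> a b /P1 Pa /Q1 Qb; apply: D.
Qed.

Lemma nodupE_map A B (E : A -> A -> Prop) (E' : B -> B -> Prop) (phi : A -> B) s :
  nodupE E s -> (forall a a', List.In a s -> List.In a' s -> E' (phi a) (phi a') -> E a a') ->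
  nodupE E' (map phi s).
Proof.
elim: s => [|a s IH] //= [Ha N] H; split.
- move=> b /In_map [x [-> Hx]]; split => HE.
  + by apply: (proj1 (Ha x Hx)); apply: H => //; [left|right].
  + by apply: (proj2 (Ha x Hx)); apply: H => //; [right|left].
- apply: IH => // x y Hx Hy Hxy; apply: H Hxy; by right.
Qed.

Lemma class_enum_map A B (P : A -> Prop) (P' : B -> Prop) E E' (phi : A -> B) s :
  equivR E' -> class_enum P E s ->
  (forall a, P a -> P' (phi a)) ->
  (forall a a', P a -> P a' -> E a a' -> E' (phi a) (phi a')) ->
  (forall a a', P a -> P a' -> E' (phi a) (phi a') -> E a a') ->
  (forall b, P' b -> exists a, P a /\ E' b (phi a)) ->
  class_enum P' E' (map phi s).
Proof.
move=> [Er [Es Et]] [H1 [H2 H3]] HP Hf Hb Hs; split; [|split].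
- by move=> b /In_map [x [-> /H1 /HP]].
- move=> b /Hs [a [Pa Eb]]; have [c Hc Eac] := H2 a Pa.
  exists (phi c); first by apply/In_map; exists c.
  apply: Et Eb _; apply: Hf => //; exact: H1.
- apply: nodupE_third; apply: (@nodupE_map _ _ E); first exact: (third_nodupE H3).
  move=> a a' /H1 ? /H1 ?; exact: Hb.
Qed.

Arguments class_enum_union {A P Q R E s1 s2}.
Arguments class_enum_map {A B P P' E E' phi s}.
Arguments class_enum_iff {A P Q E s}.
Arguments n_classes_eq {A P E s}.


Lemma Gact_cat m w1 w2 x : Gact m (w1 ++ w2) x = Gact m w1 (Gact m w2 x).
Proof. by elim: w1 => //= b w1 ->. Qed.

Lemma Gact_form m w : (exists a, forall x, Gact m w x = x + 2 * a) \/
                      (exists a, forall x, Gact m w x = 2 * a + 1 - x).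
Proof.
elim: w => [|b w [[a Ha]|[a Ha]]] /=.
- by left; exists 0 => x; rewrite mulr0 addr0.
- case: b; right; [exists (-a) | exists (m%:Z - 1 - a)] => x; rewrite Ha /r_half /r_mhalf /refl; lia.
- case: b; left; [exists (-a) | exists (m%:Z - 1 - a)] => x; rewrite Ha /r_half /r_mhalf /refl; lia.
Qed.

Lemma Gact_rev m w x : Gact m (rev w) (Gact m w x) = x.
Proof.
elim: w x => //= b w IH x; rewrite rev_cons -cats1 Gact_cat /=.
set y := Gact m w x.
have -> : (if b then r_half else r_mhalf m) ((if b then r_half else r_mhalf m) y) = y.
  by case: b; rewrite /r_half /r_mhalf /refl; lia.
exact: IH.
Qed.

Lemma Gact_transP m (n : nat) : exists w, forall x, Gact m w x = x + n%:Z * (2 * m%:Z - 2).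
Proof.
elim: n => [|n [w Hw]]; first by exists [::] => x /=; lia.
exists ([:: false; true] ++ w) => x; rewrite Gact_cat /= Hw /r_half /r_mhalf /refl; lia.
Qed.

Lemma Gact_transN m (n : nat) : exists w, forall x, Gact m w x = x - n%:Z * (2 * m%:Z - 2).
Proof.
elim: n => [|n [w Hw]]; first by exists [::] => x /=; lia.
exists ([:: true; false] ++ w) => x; rewrite Gact_cat /= Hw /r_half /r_mhalf /refl; lia.
Qed.

Lemma Gact_window m x : (1 < m)%N ->
  exists w c, (forall y, Gact m w y = y + c) /\ 0 <= x + c < 2 * m%:Z - 2.
Proof.
move=> m1; set P := 2 * m%:Z - 2.
have P0 : 0 < P by rewrite /P; lia.
have Hx := divz_eq x P.
have r0 : 0 <= (x %% P)%Z by apply: modz_ge0; lia.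
have r1 : (x %% P)%Z < P by apply: ltz_pmod.
case E: (x %/ P)%Z Hx => [n|n] Hx.
- have [w Hw] := Gact_transN m n; exists w, (- (n%:Z * P)).
  split; [by move=> y; rewrite Hw | rewrite Hx; lia].
- have [w Hw] := Gact_transP m n.+1; exists w, (n.+1%:Z * P).
  split; [by move=> y; rewrite Hw | rewrite Hx NegzE; lia].
Qed.

Lemma peq_equiv m : equivR (pair_equiv m).
Proof.
split; [|split].
- by move=> p; exists [::]; left.
- move=> p q [w [[H1 H2]|[H1 H2]]]; exists (rev w); [left|right];
    by rewrite -?H1 -?H2 !Gact_rev.
- move=> p q r [w1 [[H1 H2]|[H1 H2]]] [w2 [[K1 K2]|[K1 K2]]]; exists (w2 ++ w1);
    rewrite !Gact_cat ?H1 ?H2 ?K1 ?K2; by [left|right].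
Qed.

Lemma Gorb_form_bound m (S : int -> Prop) (g : int -> int) x b D :
  (forall w x, S x -> g (Gact m w x) = Gact m w (g x)) -> S x ->
  Gorb m x b -> g b - b <= D /\ b - g b <= D -> g x - x <= D /\ x - g x <= D.
Proof.
move=> Geq Sx [w Hw]; rewrite Hw Geq //.
by case: (Gact_form m w) => -[a Ha]; rewrite !Ha; lia.
Qed.

Lemma pperm_bound m k S g : (0 < k)%N -> lifted_pperm m k S g ->
  exists D, 0 <= D /\ forall x, S x -> g x - x <= D /\ x - g x <= D.
Proof.
move=> k0 [Sinv Ncl Geq Ginj].
have [s Hs] : exists s, class_enum S (Gorb m) s.
  move: Ncl; rewrite /n_classes; case: excluded_middle_informative => [H _|_ Hk]; first exact H.
  by rewrite -Hk in k0.
have [D [D0 HD]] : exists D, 0 <= D /\ forall b, List.In b s -> g b - b <= D /\ b - g b <= D.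
  elim: s {Hs} => [|b s [D [D0 HD]]]; first by exists 0.
  case: (lerP 0 (g b - b)) => Hb.
  - exists (D + (g b - b)); split; first lia. move=> b' /= [<-|/HD ?]; lia.
  - exists (D + (b - g b)); split; first lia. move=> b' /= [<-|/HD ?]; lia.
exists D; split => // x Sx.
have [b Hb Hxb] := proj1 (proj2 Hs) x Sx.
exact: (@Gorb_form_bound m S g x b D Geq Sx Hxb (HD b Hb)).
Qed.

Lemma pperm_inj m k S g : lifted_pperm m k S g -> forall x y, S x -> S y -> g x = g y -> x = y.
Proof.
move=> [Sinv _ Geq Ginj] x y Sx Sy Exy.
have [w Hw] : Gorb m x y by apply: Ginj => //; exists [::]; rewrite Exy.
have := Geq w x Sx; rewrite -Hw -Exy.
by case: (Gact_form m w) => -[a Ha]; rewrite Hw !Ha; lia.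
Qed.

Arguments pperm_bound {m k S g}.
Arguments pperm_inj {m k S g}.

Lemma box_pairs m (Q : int * int -> Prop) (N : int) : (1 < m)%N ->
  (forall p, Q p -> p.1 < p.2 /\ p.2 - p.1 <= N) ->
  (forall p q, Q p -> pair_equiv m p q -> q.1 < q.2 -> Q q) ->
  exists s, class_enum Q (pair_equiv m) s.
Proof.
move=> m1 HB HI.
apply: (@cover_enum _ Q (pair_equiv m)
  [seq (x%:Z, y%:Z) | x <- iota 0 (2 * m), y <- iota 0 (2 * m + absz N)]).
  exact: peq_equiv.
move=> [i j] Qp; have [w [c [Hw Hc]]] := Gact_window m i m1.
have [lij dij] := HB _ Qp; rewrite /= in lij dij.
have Ep : pair_equiv m (i, j) (i + c, j + c) by exists w; left; rewrite !Hw.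
exists (i + c, j + c); split => //; last by apply: (HI _ _ Qp Ep); rewrite /=; lia.
apply: In_mem; apply/allpairsP; exists (absz (i + c), absz (j + c)); split => /=.
- rewrite mem_iota; lia.
- rewrite mem_iota; lia.
- congr pair; lia.
Qed.

Lemma box_int (Q : int -> Prop) (lo : int) (n : nat) :
  (forall x, Q x -> lo <= x <= lo + n%:Z) -> exists s, class_enum Q (@eq int) s.
Proof.
move=> HB; apply: (@cover_enum _ Q eq [seq lo + i%:Z | i <- iota 0 n.+1]); first exact: eq_equivR.
move=> x Qx; exists x; split => //; apply: In_mem; apply/mapP; exists (absz (x - lo)).
- rewrite mem_iota; have := HB x Qx; lia.
- have := HB x Qx; lia.
Qed.

Lemma peq_sets m u v u' v' :
  pair_equiv m u v ->
  (u'.1 = u.1 /\ u'.2 = u.2) \/ (u'.1 = u.2 /\ u'.2 = u.1) ->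
  (v'.1 = v.1 /\ v'.2 = v.2) \/ (v'.1 = v.2 /\ v'.2 = v.1) ->
  pair_equiv m u' v'.
Proof.
move=> [w Hw] Hu Hv; exists w.
case: Hu => -[-> ->]; case: Hv => -[-> ->]; case: Hw => -[-> ->]; by [left|right].
Qed.

Lemma peq_map m (S : int -> Prop) (h : int -> int) a b :
  (forall w x, S x -> h (Gact m w x) = Gact m w (h x)) -> S a.1 -> S a.2 ->
  pair_equiv m a b -> pair_equiv m (h a.1, h a.2) (h b.1, h b.2).
Proof.
move=> Heq S1 S2 [w Hw]; exists w => /=.
case: Hw => -[<- <-]; rewrite !Heq //; by [left|right].
Qed.

Lemma peq_unmap m (S : int -> Prop) (h : int -> int) a b :
  (forall w x, S x -> S (Gact m w x)) ->
  (forall w x, S x -> h (Gact m w x) = Gact m w (h x)) ->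
  (forall x y, S x -> S y -> h x = h y -> x = y) ->
  S a.1 -> S a.2 -> S b.1 -> S b.2 ->
  pair_equiv m (h a.1, h a.2) (h b.1, h b.2) -> pair_equiv m a b.
Proof.
move=> Sinv Heq Hinj S1 S2 T1 T2 [w Hw]; exists w; rewrite /= -!Heq // in Hw.
case: Hw => -[H1 H2]; [left|right]; split; apply: Hinj => //; exact: Sinv.
Qed.

Definition Dfp (S : int -> Prop) (g f : int -> int) (p : int * int) : Prop :=
  S p.1 /\ S p.2 /\ p.1 < p.2 /\
  ((g p.1 < g p.2 /\ f (g p.2) < f (g p.1)) \/ (g p.2 < g p.1 /\ f (g p.1) < f (g p.2))).

Lemma cross_inv m k S g p q : lifted_pperm m k S g -> crossing_pair S g p ->
  pair_equiv m p q -> q.1 < q.2 -> crossing_pair S g q.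
Proof.
move=> [Sinv _ Geq _].
case: p => p1 p2; case: q => q1 q2 [/= S1 [S2 [l12 c12]]] [w /= Hw] /= lq.
have Eg1 := Geq w _ S1; have Eg2 := Geq w _ S2.
have T1 := Sinv w _ S1; have T2 := Sinv w _ S2.
rewrite /crossing_pair /=.
case: Hw lq => -[<- <-] lq; (split; [done|split; [done|split => //]]);
  move: lq; rewrite Eg1 Eg2; case: (Gact_form m w) => -[a Ha]; rewrite !Ha; lia.
Qed.

Lemma Df_inv m k S T g f p q : lifted_pperm m k S g -> lifted_pperm m k T f ->
  (forall x, S x -> T (g x)) ->
  Dfp S g f p -> pair_equiv m p q -> q.1 < q.2 -> Dfp S g f q.
Proof.
move=> [Sinv _ Geq _] [_ _ Feq _] Tg.
case: p => p1 p2; case: q => q1 q2 [/= S1 [S2 [l12 c12]]] [w /= Hw] /= lq.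
have Eg1 := Geq w _ S1; have Eg2 := Geq w _ S2.
have Ef1 := Feq w _ (Tg _ S1); have Ef2 := Feq w _ (Tg _ S2).
have T1 := Sinv w _ S1; have T2 := Sinv w _ S2.
rewrite /Dfp /=.
case: Hw lq => -[<- <-] lq; (split; [done|split; [done|split => //]]);
  move: lq; rewrite Eg1 Eg2 Ef1 Ef2; case: (Gact_form m w) => -[a Ha]; rewrite !Ha; lia.
Qed.

Arguments peq_sets {m u v u' v'}.
Arguments peq_map {m S h a b}.
Arguments peq_unmap {m S h a b}.
Arguments cross_inv {m k S g p q}.
Arguments Df_inv {m k S T g f p q}.


Lemma no_double m k S T g f : (0 < k)%N -> (1 < m)%N ->
  lifted_pperm m k S g -> lifted_pperm m k T f ->
  (forall y, T y <-> exists2 x, S x & y = g x) ->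
  cr m S (f \o g) = (cr m T f + cr m S g)%N ->
  forall p, ~ (crossing_pair S g p /\ Dfp S g f p).
Proof.
move=> k0 m1 HS HT HTg Hcr.
have Tg : forall x, S x -> T (g x) by move=> x Sx; apply/HTg; exists x.
have [Dg [Dg0 HDg]] := pperm_bound k0 HS.
have [Df [Df0 HDf]] := pperm_bound k0 HT.
have ginj := pperm_inj HS; have finj := pperm_inj HT.
have EE := peq_equiv m. have [_ [Esym _]] := EE.
move: HS => /[dup] HS [Sinv _ Geq _].
pose Cg := crossing_pair S g. pose D := Dfp S g f.
pose A p := Cg p /\ ~ D p. pose B p := D p /\ ~ Cg p. pose C p := Cg p /\ D p.
have CgI : forall p q, Cg p -> pair_equiv m p q -> q.1 < q.2 -> Cg q.
  by move=> p q; apply: cross_inv HS.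
have DI : forall p q, D p -> pair_equiv m p q -> q.1 < q.2 -> D q.
  by move=> p q; apply: Df_inv HS HT Tg.
have CgB : forall p, Cg p -> p.1 < p.2 /\ p.2 - p.1 <= 2 * Dg + 2 * Df.
  move=> [p1 p2] [/= S1 [S2 [l c]]]; have := HDg _ S1; have := HDg _ S2; lia.
have DB : forall p, D p -> p.1 < p.2 /\ p.2 - p.1 <= 2 * Dg + 2 * Df.
  move=> [p1 p2] [/= S1 [S2 [l c]]]; have := HDg _ S1; have := HDg _ S2.
  have := HDf _ (Tg _ S1); have := HDf _ (Tg _ S2); lia.
have [sA hA] : exists s, class_enum A (pair_equiv m) s.
  apply: (@box_pairs m _ (2 * Dg + 2 * Df) m1).
  - by move=> p [Cp _]; apply: CgB.
  - move=> p q [Cp nDp] Epq lq; split; first exact: (CgI _ _ Cp Epq lq).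
    move=> Dq; apply: nDp; apply: (DI _ _ Dq (Esym _ _ Epq)); exact: (proj1 (CgB _ Cp)).
have [sB hB] : exists s, class_enum B (pair_equiv m) s.
  apply: (@box_pairs m _ (2 * Dg + 2 * Df) m1).
  - by move=> p [Dp _]; apply: DB.
  - move=> p q [Dp nCp] Epq lq; split; first exact: (DI _ _ Dp Epq lq).
    move=> Cq; apply: nCp; apply: (CgI _ _ Cq (Esym _ _ Epq)); exact: (proj1 (DB _ Dp)).
have [sC hC] : exists s, class_enum C (pair_equiv m) s.
  apply: (@box_pairs m _ (2 * Dg + 2 * Df) m1).
  - by move=> p [Cp _]; apply: CgB.
  - move=> p q [Cp Dp] Epq lq; split; [exact: (CgI _ _ Cp Epq lq)|exact: (DI _ _ Dp Epq lq)].
have hCg : class_enum Cg (pair_equiv m) (sA ++ sC).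
  apply: (class_enum_union hA hC).
  - move=> a b [Ca nDa] [Cb Db]; have la := proj1 (CgB _ Ca); split => E.
    + by apply: nDa; apply: (DI _ _ Db (Esym _ _ E)).
    + by apply: nDa; apply: (DI _ _ Db E).
  - move=> p; split => [Cp|[[]|[]]] //; case: (classic (D p)) => Dp; [right|left] => //.
have hD : class_enum D (pair_equiv m) (sB ++ sC).
  apply: (class_enum_union hB hC).
  - move=> a b [Da nCa] [Cb Db]; have la := proj1 (DB _ Da); split => E.
    + by apply: nCa; apply: (CgI _ _ Cb (Esym _ _ E)).
    + by apply: nCa; apply: (CgI _ _ Cb E).
  - move=> p; split => [Dp|[[]|[]]] //; case: (classic (Cg p)) => Cp; [right|left] => //.
have hCfg : class_enum (crossing_pair S (f \o g)) (pair_equiv m) (sA ++ sB).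
  apply: (class_enum_union hA hB).
  - move=> a b [Ca nDa] [Db nCb]; have lb := proj1 (DB _ Db); split => E.
    + by apply: nCb; apply: (CgI _ _ Ca E).
    + by apply: nCb; apply: (CgI _ _ Ca (Esym _ _ E)).
  - move=> [p1 p2]; rewrite /A /B /Cg /D /crossing_pair /Dfp /=.
    case: (classic (S p1 /\ S p2 /\ p1 < p2)) => [[S1 [S2 l]]|H]; last by tauto.
    have ng : g p1 <> g p2 by move/(ginj _ _ S1 S2) => E; rewrite E in l; lia.
    have nf : f (g p1) <> f (g p2) by move/(finj _ _ (Tg _ S1) (Tg _ S2)).
    have HDc : ((g p1 < g p2 /\ f (g p2) < f (g p1)) \/ (g p2 < g p1 /\ f (g p1) < f (g p2)))
      <-> ((g p2 < g p1 /\ ~ (f (g p2) < f (g p1))) \/ (~ (g p2 < g p1) /\ f (g p2) < f (g p1))).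
      lia.
    move: HDc; tauto.
pose phi p := if g p.1 < g p.2 then (g p.1, g p.2) else (g p.2, g p.1).
have phiC : forall p, (g p.1 = (phi p).1 /\ g p.2 = (phi p).2) \/ (g p.1 = (phi p).2 /\ g p.2 = (phi p).1).
  by move=> p; rewrite /phi; case: ifP => _; [left|right].
have phiC' : forall p, ((phi p).1 = g p.1 /\ (phi p).2 = g p.2) \/ ((phi p).1 = g p.2 /\ (phi p).2 = g p.1).
  by move=> p; rewrite /phi; case: ifP => _; [left|right].
have hCf : class_enum (crossing_pair T f) (pair_equiv m) (map phi (sB ++ sC)).
  apply: (class_enum_map EE hD).
  - move=> [a1 a2] [/= S1 [S2 [l c]]]; rewrite /phi /= /crossing_pair.
    have T1 := Tg _ S1; have T2 := Tg _ S2.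
    by case: ifP => [h|/negbT h] /=; (split; [done|split; [done|]]); lia.
  - move=> a a' [S1 [S2 _]] _ E.
    apply: (peq_sets (peq_map Geq S1 S2 E)); [exact: phiC'|exact: phiC'].
  - move=> a a' [S1 [S2 _]] [S1' [S2' _]] E.
    apply: (peq_unmap Sinv Geq ginj S1 S2 S1' S2').
    apply: (peq_sets E); [exact: phiC|exact: phiC].
  - move=> [u v] [/= Tu [Tv [l c]]].
    have [x Sx Ex] := proj1 (HTg u) Tu; have [y Sy Ey] := proj1 (HTg v) Tv.
    have nxy : x <> y by move=> E; rewrite Ex Ey E in l; lia.
    case: (ltrP x y) => hxy.
    + exists (x, y); split.
      * rewrite /D /Dfp /=; do 3!(split => //); left; rewrite -Ex -Ey; lia.
      * rewrite /phi /= -Ex -Ey l; exact: (proj1 EE).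
    + have hyx : y < x by lia.
      exists (y, x); split.
      * rewrite /D /Dfp /=; do 3!(split => //); right; rewrite -Ex -Ey; lia.
      * have -> : phi (y, x) = (u, v) by rewrite /phi /= -Ex -Ey ifF //; apply/negbTE; lia.
        exact: (proj1 EE).
have e1 : cr m S g = size (sA ++ sC) := n_classes_eq EE hCg.
have e2 : cr m T f = size (map phi (sB ++ sC)) := n_classes_eq EE hCf.
have e3 : cr m S (f \o g) = size (sA ++ sB) := n_classes_eq EE hCfg.
move: Hcr; rewrite e1 e2 e3 size_map !size_cat => Hs.
have sC0 : sC = [::] by case E: sC Hs => [//|c0 s'] /= Hs; lia.
move=> p Cp; have [b Hb _] := proj1 (proj2 hC) p Cp.
by rewrite sC0 in Hb.
Qed.

Arguments no_double {m k S T g f}.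


Lemma rat_lt1 (a j : int) : ((a%:~R : rat) < j%:~R - 1 / 2) <-> (a < j).
Proof.
split => H.
- rewrite ltNge; apply/negP => Hja; move: H.
  have : (j%:~R : rat) <= a%:~R by rewrite ler_int. lra.
- have : (a%:~R : rat) <= (j - 1)%:~R by rewrite ler_int; lia.
  rewrite intrB; lra.
Qed.

Lemma rat_lt2 (a j : int) : ((j%:~R - 1 / 2 : rat) < a%:~R) <-> (j <= a).
Proof.
split => H.
- rewrite leNgt; apply/negP => Hja; move: H.
  have : (a%:~R : rat) <= (j - 1)%:~R by rewrite ler_int; lia.
  rewrite intrB; lra.
- have : (j%:~R : rat) <= a%:~R by rewrite ler_int. lra.
Qed.

Definition Wp (S : int -> Prop) (h : int -> int) (j : int) (i : int) : Prop :=
  S i /\ ((i < j /\ j <= h i) \/ (j <= i /\ h i < j)).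

Lemma weight_enum S h j s : class_enum (Wp S h j) (@eq int) s -> weight S h j = (size s)%:R / 2.
Proof.
move=> hs; rewrite /weight /fin_card.
set Q := (fun i : int => _).
have hQ : class_enum Q eq s.
  apply: (class_enum_iff _ hs) => i; rewrite /Q /Wp; split => -[Si H]; split => //.
  - case: H => -[H1 H2]; [left|right]; split.
    + exact/rat_lt1. + exact/rat_lt2. + exact/rat_lt2. + exact/rat_lt1.
  - case: H => -[H1 H2]; [left|right]; split.
    + exact/rat_lt1. + exact/rat_lt2. + exact/rat_lt2. + exact/rat_lt1.
by rewrite (n_classes_eq (eq_equivR _) hQ).
Qed.

Arguments weight_enum {S h j s}.

Lemma weight_add m k S T g f j : (0 < k)%N -> lifted_pperm m k S g -> lifted_pperm m k T f ->
  (forall y, T y <-> exists2 x, S x & y = g x) ->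
  (forall i, S i -> ~ ((i < j /\ j <= g i /\ f (g i) < j) \/ (j <= i /\ g i < j /\ j <= f (g i)))) ->
  weight S (f \o g) j = weight T f j + weight S g j.
Proof.
move=> k0 HS HT HTg NB.
have Tg : forall x, S x -> T (g x) by move=> x Sx; apply/HTg; exists x.
have [Dg [Dg0 HDg]] := pperm_bound k0 HS.
have [Df [Df0 HDf]] := pperm_bound k0 HT.
have ginj := pperm_inj HS.
pose N := Dg + Df + 1.
have [s1 h1] : exists s, class_enum (Wp S g j) eq s.
  apply: (@box_int _ (j - N) (absz (2 * N))) => i [Si H]; have := HDg _ Si; rewrite /N; lia.
pose Q2 i := S i /\ Wp T f j (g i).
have [s2 h2] : exists s, class_enum Q2 eq s.
  apply: (@box_int _ (j - N) (absz (2 * N))) => i [Si [Ti H]].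
  have := HDg _ Si; have := HDf _ Ti; rewrite /N; lia.
have h12 : class_enum (Wp S (f \o g) j) eq (s1 ++ s2).
  apply: (class_enum_union h1 h2).
  - move=> a b [Sa Ha] [_ [_ Hb]]; split => E; subst; apply: (NB _ Sa); lia.
  - move=> i; rewrite /Wp /Q2 /=; case: (classic (S i)) => Si; last by tauto.
    have nb := NB i Si; have Ti := Tg i Si.
    have HH : ((i < j /\ j <= f (g i)) \/ (j <= i /\ f (g i) < j)) <->
      ((i < j /\ j <= g i) \/ (j <= i /\ g i < j)) \/
      ((g i < j /\ j <= f (g i)) \/ (j <= g i /\ f (g i) < j)) by lia.
    move: HH; rewrite /Wp; tauto.
have h2' : class_enum (Wp T f j) eq (map g s2).
  apply: (class_enum_map (eq_equivR _) h2).
  - by move=> a [_ H].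
  - by move=> a a' _ _ ->.
  - move=> a a' [Sa _] [Sa' _]; exact: ginj.
  - move=> b [Tb H]; have [x Sx Ex] := proj1 (HTg b) Tb; exists x; split => //.
    by rewrite /Q2 -Ex; split => //; split.
rewrite (weight_enum h12) (weight_enum h1) (weight_enum h2') size_cat size_map natrD mulrDl addrC.
by [].
Qed.

Arguments weight_add {m k S T g f j}.

Theorem mainTheorem2 (m k : nat) (S T : int -> Prop) (g f : int -> int) :
  (0 < k)%N -> (k < m)%N ->
  lifted_pperm m k S g ->
  lifted_pperm m k T f ->
  (forall y, T y <-> exists2 x, S x & y = g x) ->
  cr m S (f \o g) = (cr m T f + cr m S g)%N ->
  weight S (f \o g) 1 = weight T f 1 + weight S g 1 /\
  weight S (f \o g) m%:Z = weight T f m%:Z + weight S g m%:Z.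
Proof.
move=> k0 km HS HT HTg Hcr.
have m1 : (1 < m)%N by lia.
have ND := no_double k0 m1 HS HT HTg Hcr.
have [Sinv _ Geq _] := HS. have [_ _ Feq _] := HT.
have Tg : forall x, S x -> T (g x) by move=> x Sx; apply/HTg; exists x.
have NB : forall (j : int) w, (forall x, Gact m w x = 2 * j - 1 - x) -> forall i, S i ->
    ~ ((i < j /\ j <= g i /\ f (g i) < j) \/ (j <= i /\ g i < j /\ j <= f (g i))).
  move=> j w Hw i Si Hb.
  have Sr := Sinv w i Si. have Eg := Geq w i Si. have Ef := Feq w (g i) (Tg i Si).
  rewrite !Hw in Sr Eg Ef.
  case: Hb => Hb.
  - apply: (ND (i, 2 * j - 1 - i)); rewrite /crossing_pair /Dfp /= Eg Ef.
    split; (split; [done | split; [done|]]); lia.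
  - apply: (ND (2 * j - 1 - i, i)); rewrite /crossing_pair /Dfp /= Eg Ef.
    split; (split; [done | split; [done|]]); lia.
split; apply: (weight_add k0 HS HT HTg).
- by apply: (NB _ [:: true]) => x /=; rewrite /r_half /refl; lia.
- by apply: (NB _ [:: false]) => x /=; rewrite /r_mhalf /refl; lia.
Qed.
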